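(* Let $V$ be a finite-dimensional vector space over an algebraically closed field $k$, let $G = \mathrm{GL}(V)$, let $U \subseteq V$ be a subspace and fix a complement $\widetilde{U}$ to $U$ in $V$. Let $K = \mathrm{GL}(U) \le G$, embedded via the decomposition $V = U \oplus \widetilde{U}$ (acting trivially on $\widetilde{U}$). Then $\mathcal{S}_K = \{W \subseteq V \mid (W \subseteq V) \in \mathcal{F}_K\}$.
   Context: A flag in $V$ is a chain $0\neq W_1 \subsetneq \dots \subsetneq W_m \subsetneq V$, written $(W_1\subseteq\dots\subseteq W_m\subseteq V)$. For a cocharacter $\lambda$ of $G$, $P_\lambda = \{g \in G \mid \lim_{a\to 0}\lambda(a)g\lambda(a)^{-1} \text{ exists}\}$. $\mathcal{F}_K$ is the set of flags whose stabilizer in $G$ equals $P_\lambda$ for some cocharacter $\lambda$ of $K$, and $\mathcal{S}_K$ is the set of subspaces of $V$ appearing in flags from $\mathcal{F}_K$. *)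

(* Defs.v *)
From HB Require Import structures.
From mathcomp Require Import all_boot all_order all_algebra.
Set Implicit Arguments. Unset Strict Implicit. Unset Printing Implicit Defensive.
Import GRing.Theory.
Local Open Scope ring_scope.

(* V = k^n, vectors written as row vectors; subspaces are row spaces of
   matrices (mxalgebra). A matrix g acts on V by the usual left action on
   column vectors, i.e. on a row vector v by v |-> v *m g^T, hence on a
   subspace W by W |-> W *m g^T. *)

(* K = GL(U) embedded in GL(V) via V = U (+) Ut, acting trivially on Ut:
   invertible g fixing every vector of Ut and mapping U into U. *)
Definition inK (k : fieldType) (n : nat) (U Ut : 'M[k]_n) (g : 'M[k]_n) : bool :=
  [&& g \in unitmx, Ut *m g^T == Ut & (U *m g^T <= U)%MS].

(* A cocharacter of a subgroup H of GL_n: a morphism of algebraic groups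
   G_m -> GL_n with image in H, i.e. a group homomorphism k^x -> GL_n whose
   matrix entries are regular functions on G_m (Laurent polynomials). Only
   the values at a <> 0 are relevant. *)
Definition cocharacter_of (k : fieldType) (n : nat) (H : 'M[k]_n -> bool)
    (lam : k -> 'M[k]_n) : Prop :=
  [/\ forall a, a != 0 -> (lam a \in unitmx) && H (lam a),
      lam 1 = 1%:M,
      forall a b, a != 0 -> b != 0 -> lam (a * b) = lam a *m lam b &
      exists (N : nat) (p : 'I_n -> 'I_n -> {poly k}),
        forall a, a != 0 -> forall i j, lam a i j = a ^- N * (p i j).[a] ].

(* lim_{a -> 0} lam(a) g lam(a)^-1 exists (in G): the morphism
   a |-> lam(a) g lam(a)^-1 on G_m extends to a morphism A^1 -> G. *)
Definition lim0_exists (k : fieldType) (n : nat) (lam : k -> 'M[k]_n)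
    (g : 'M[k]_n) : Prop :=
  exists q : 'I_n -> 'I_n -> {poly k},
    (forall a, a != 0 -> forall i j,
        (lam a *m g *m invmx (lam a)) i j = (q i j).[a]) /\
    (\matrix_(i, j) (q i j).[0]) \in unitmx.

Definition P_lam (k : fieldType) (n : nat) (lam : k -> 'M[k]_n) (g : 'M[k]_n)
  : Prop := g \in unitmx /\ lim0_exists lam g.

Definition is_flag (k : fieldType) (n : nat) (fl : seq 'M[k]_n) : bool :=
  all (fun W => (0 < \rank W)%N && (\rank W < n)%N) fl &&
  sorted (fun A B => (A < B)%MS) fl.

Definition stab (k : fieldType) (n : nat) (fl : seq 'M[k]_n) (g : 'M[k]_n)
  : bool := (g \in unitmx) && all (fun W => (W *m g^T == W)%MS) fl.

Definition in_FK (k : fieldType) (n : nat) (U Ut : 'M[k]_n) (fl : seq 'M[k]_n)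
  : Prop :=
  is_flag fl /\
  exists lam, cocharacter_of (inK U Ut) lam /\
    (forall g, stab fl g <-> P_lam lam g).

Definition in_SK (k : fieldType) (n : nat) (U Ut : 'M[k]_n) (W : 'M[k]_n)
  : Prop :=
  exists fl, in_FK U Ut fl /\ exists2 W', W' \in fl & (W' == W)%MS.

(* Main.v *)
Require Import Defs.
From HB Require Import structures.
From mathcomp Require Import all_boot all_order all_algebra.
From mathcomp Require Import ring.
Set Implicit Arguments. Unset Strict Implicit. Unset Printing Implicit Defensive.
Import GRing.Theory.
Local Open Scope ring_scope.

Section Aux.
Variable k : closedFieldType.

Lemma poly_nz0 (P : {poly k}) : (forall a, a != 0 -> P.[a] = 0) -> P = 0.
Proof.
move=> H; apply/eqP; apply/negPn/negP => P0.
have hs : size (P * 'X - 1) != 1%N.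
  have sP : (0 < size P)%N by rewrite size_poly_gt0.
  rewrite size_polyDl ?size_mulX // ?size_polyN ?size_poly1 ?size_mulX //.
  by rewrite eqSS -lt0n.
case/closed_rootP: hs => a /rootP; rewrite !hornerE.
have [->|a0] := eqVneq a 0.
  by rewrite mulr0 sub0r => /eqP; rewrite oppr_eq0 oner_eq0.
by rewrite (H a a0) mul0r sub0r => /eqP; rewrite oppr_eq0 oner_eq0.
Qed.

Lemma coef_extract (p q D : nat) (X : 'I_D -> 'M[k]_(p,q)) :
  (forall a : k, a != 0 -> \sum_(m < D) a ^+ m *: X m = 0) -> forall m, X m = 0.
Proof.
case: D X => [|D] X H m; first by case: m.
apply/matrixP => i j; rewrite mxE.
pose P := \poly_(m < D.+1) X (inord m) i j.
have P0 : P = 0.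
  apply: poly_nz0 => a a0; rewrite horner_poly.
  transitivity ((\sum_(m < D.+1) a ^+ m *: X m) i j); last by rewrite H // mxE.
  rewrite summxE; apply: eq_bigr => l _; rewrite mxE mulrC inord_val //.
have := congr1 (fun P : {poly k} => P`_m) P0; rewrite coef_poly ltn_ord inord_val coef0.
by [].
Qed.

End Aux.

Section Cochar.
Variables (k : closedFieldType) (n : nat) (lam : k -> 'M[k]_n) (N D : nat)
  (C : 'I_D -> 'M[k]_n).
Hypothesis lamE : forall a, a != 0 -> lam a = a ^- N *: \sum_(m < D) a ^+ m *: C m.
Hypothesis lam1 : lam 1 = 1%:M.
Hypothesis lamM : forall a b, a != 0 -> b != 0 -> lam (a * b) = lam a *m lam b.

Let S a := \sum_(m < D) a ^+ m *: C m.

Lemma SE a : a != 0 -> S a = a ^+ N *: lam a.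
Proof.
move=> a0; rewrite lamE // scalerA mulrV ?scale1r //.
by rewrite unitfE expf_neq0.
Qed.

Lemma C_sum : \sum_(m < D) C m = 1%:M.
Proof.
have := SE (oner_neq0 k); rewrite lam1 expr1n scale1r => <-.
by apply: eq_bigr => m _; rewrite expr1n scale1r.
Qed.

Lemma S_mul a b : a != 0 -> b != 0 -> S (a * b) = S a *m S b.
Proof.
move=> a0 b0; rewrite !SE ?mulf_neq0 // lamM // -scalemxAl -scalemxAr scalerA.
by rewrite exprMn.
Qed.

Lemma C_orth m m' : C m *m C m' = if m == m' then C m else 0.
Proof.
have H1 : forall a, a != 0 -> forall m' : 'I_D,
    a ^+ m' *: C m' - \sum_(m < D) a ^+ m *: (C m *m C m') = 0.
  move=> a a0; apply: coef_extract => b b0.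
  have := S_mul a0 b0; rewrite /S => E.
  rewrite (eq_bigr (fun m' : 'I_D => (a * b) ^+ m' *: C m' -
     b ^+ m' *: ((\sum_(m < D) a ^+ m *: C m) *m C m'))); last first.
    move=> i _; rewrite scalerBr scalerA exprMn mulrC; congr (_ - _).
    by rewrite mulmx_suml; congr (_ *: _); apply: eq_bigr => l _; rewrite scalemxAl.
  rewrite sumrB E mulmx_sumr; apply/eqP; rewrite subr_eq0; apply/eqP.
  by apply: eq_bigr => i _; rewrite scalemxAr.
have H2 : forall m' : 'I_D, forall m : 'I_D,
   (m == m')%:R *: C m' - C m *m C m' = 0.
  move=> m0; apply: coef_extract => a a0.
  rewrite -[RHS](H1 a a0 m0); under eq_bigr do rewrite scalerBr.
  rewrite sumrB; congr (_ - _).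
  rewrite (bigD1 m0) //= eqxx scale1r big1 ?addr0 // => i /negbTE ->.
  by rewrite scale0r scaler0.
have := H2 m' m; move/eqP; rewrite subr_eq0 => /eqP <-.
by case: eqP => [->|_]; rewrite ?scale1r ?scale0r.
Qed.

Lemma lamV a : a != 0 -> lam a *m lam a^-1 = 1%:M.
Proof. by move=> a0; rewrite -lamM ?invr_eq0 // mulfV. Qed.

Lemma lam_unit a : a != 0 -> lam a \in unitmx.
Proof. by move=> a0; case: (mulmx1_unit (lamV a0)). Qed.

Lemma lam_inv a : a != 0 -> invmx (lam a) = lam a^-1.
Proof.
move=> a0; rewrite -[LHS]mulmx1 -(lamV a0) mulmxA mulVmx ?mul1mx //.
exact: lam_unit.
Qed.

Lemma lam_comm a b : a != 0 -> b != 0 -> lam a *m lam b = lam b *m lam a.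
Proof. by move=> a0 b0; rewrite -!lamM // mulrC. Qed.

Lemma lamC a j : a != 0 -> lam a *m C j = (a ^- N * a ^+ j) *: C j.
Proof.
move=> a0; rewrite lamE // -scalemxAl mulmx_suml -scalerA; congr (_ *: _).
rewrite (bigD1 j) //= -scalemxAl C_orth eqxx big1 ?addr0 // => i /negbTE ij.
by rewrite -scalemxAl C_orth ij scaler0.
Qed.

Lemma Clam a j : a != 0 -> C j *m lam a = (a ^- N * a ^+ j) *: C j.
Proof.
move=> a0; rewrite lamE // -scalemxAr mulmx_sumr -scalerA; congr (_ *: _).
rewrite (bigD1 j) //= -scalemxAr C_orth eqxx big1 ?addr0 // => i /negbTE ij.
by rewrite -scalemxAr C_orth eq_sym ij scaler0.
Qed.

Lemma lamTE a : a != 0 -> (lam a)^T = a ^- N *: \sum_(m < D) a ^+ m *: (C m)^T.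
Proof.
by move=> a0; rewrite lamE // linearZ /= linear_sum; congr (_ *: _);
  apply: eq_bigr => i _; rewrite linearZ.
Qed.

Lemma stable_E (m1 : nat) (Y : 'M[k]_(m1, n)) :
  (forall b, b != 0 -> (Y *m (lam b)^T <= Y)%MS) ->
  forall m, (Y *m (C m)^T <= Y)%MS.
Proof.
move=> H; have H2 : forall m, Y *m (C m)^T *m cokermx Y = 0.
  apply: coef_extract => b b0.
  have := H b b0; rewrite submxE lamTE // -scalemxAr mulmx_sumr -scalemxAl mulmx_suml.
  rewrite scaler_eq0 invr_eq0 expf_eq0 (negbTE b0) andbF /= => /eqP E.
  rewrite -[RHS]E; apply: eq_bigr => i _.
  by rewrite -scalemxAr -scalemxAl.
by move=> m; rewrite submxE H2.
Qed.

Lemma fixed_E (m1 : nat) (Y : 'M[k]_(m1, n)) :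
  (forall b, b != 0 -> Y *m (lam b)^T = Y) ->
  forall m : 'I_D, (m : nat) != N -> Y *m (C m)^T = 0.
Proof.
move=> H m mN; apply/matrixP => i j; rewrite [RHS]mxE.
set z := (Y *m (C m)^T) i j.
have Hb : forall b, b != 0 -> z * (b ^+ m - b ^+ N) = 0.
  move=> b b0.
  have : Y *m (C m)^T = (b ^- N * b ^+ m) *: (Y *m (C m)^T).
    by rewrite -{1}(H b b0) -mulmxA -trmx_mul Clam // linearZ /= scalemxAr.
  move/(congr1 (fun M : 'M[k]_(m1, n) => b ^+ N * M i j)); rewrite -/z mxE -/z.
  rewrite mulrA mulrA mulfV ?expf_neq0 // mul1r => E.
  by rewrite mulrBr [z * b ^+ m]mulrC [z * b ^+ N]mulrC E subrr.
have P0 : z *: ('X^m - 'X^N : {poly k}) = 0.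
  apply: poly_nz0 => b b0; rewrite hornerZ hornerD hornerN !hornerXn.
  exact: Hb.
move/eqP: P0; rewrite scale_poly_eq0 => /orP [/eqP //|].
rewrite subr_eq0 => /eqP /(congr1 (size : {poly k} -> nat)).
by rewrite !size_polyXn => -[] /eqP; rewrite (negbTE mN).
Qed.

End Cochar.

Lemma scal_lem (k : fieldType) (a : k) (N i j : nat) : a != 0 -> (j <= i)%N ->
  (a ^- N * a ^+ i) * (a^-1 ^- N * a^-1 ^+ j) = a ^+ (i - j).
Proof.
move=> a0 hji.
rewrite !exprVn invrK -{1}(subnK hji) exprD.
have u : a ^+ N != 0 by rewrite expf_neq0.
have v : a ^+ j != 0 by rewrite expf_neq0.
by field; rewrite u v.
Qed.

Lemma col_scalar (k : fieldType) (n : nat) (x : 'rV[k]_n) (kk : 'I_n) :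
  x *m delta_mx kk 0 = (x 0 kk)%:M.
Proof.
by rewrite -colE; apply/matrixP => a b; rewrite (ord1 a) (ord1 b) !mxE eqxx.
Qed.

Section Main.
Variables (k : closedFieldType) (n : nat) (lam : k -> 'M[k]_n) (N D : nat)
  (C : 'I_D -> 'M[k]_n).
Hypothesis lamE : forall a, a != 0 -> lam a = a ^- N *: \sum_(m < D) a ^+ m *: C m.
Hypothesis lam1 : lam 1 = 1%:M.
Hypothesis lamM : forall a b, a != 0 -> b != 0 -> lam (a * b) = lam a *m lam b.
Variable W : 'M[k]_n.
Hypothesis Pstab : forall g : 'M[k]_n, P_lam lam g -> (W *m g^T <= W)%MS.

Lemma W_E m : (W *m (C m)^T <= W)%MS.
Proof.
apply: (stable_E lamE) => b b0; apply: Pstab; split; first exact: lam_unit.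
exists (fun r s => (lam b r s)%:P); split.
  move=> a a0 r s; rewrite hornerC (lam_inv lam1 lamM) //.
  by rewrite lam_comm // -mulmxA (lamV lam1 lamM) ?mulmx1.
have -> : \matrix_(i, j) ((lam b i j)%:P).[0] = lam b.
  by apply/matrixP => r s; rewrite mxE hornerC.
exact: lam_unit.
Qed.

Lemma W_X (j i : 'I_D) (X : 'M[k]_n) : (j <= i)%N ->
  X = (C j)^T *m X *m (C i)^T -> (1%:M + X) \in unitmx -> (W *m X <= W)%MS.
Proof.
move=> hji hX hu.
have XT : X^T = C i *m X^T *m C j.
  by rewrite {1}hX !trmx_mul !trmxK mulmxA.
have P : P_lam lam (1%:M + X)^T.
  split; first by rewrite unitmx_tr.
  exists (fun r s => (1%:M r s : k)%:P + X s r *: 'X^(i - j)); split.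
    move=> a a0 r s; rewrite (lam_inv lam1 lamM) //.
    have -> : lam a *m (1%:M + X)^T *m lam a^-1 = 1%:M + a ^+ (i - j) *: X^T.
      rewrite linearD /= trmx1 mulmxDr mulmxDl mulmx1 (lamV lam1 lamM) //.
      congr (_ + _); rewrite XT !mulmxA (lamC lamE lamM) // -scalemxAl.
      rewrite -!mulmxA (Clam lamE lamM) ?invr_neq0 // -scalemxAr -scalemxAl scalerA.
      by rewrite mulrC scal_lem // mulmxA.
    by rewrite !mxE hornerD hornerC hornerZ hornerXn mulrC.
  have -> : \matrix_(r, s) ((1%:M r s : k)%:P + X s r *: 'X^(i - j)).[0]
       = (1%:M + 0 ^+ (i - j) *: X)^T.
    by apply/matrixP => r s; rewrite !mxE hornerD hornerC hornerZ hornerXn mulrC eq_sym.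
  rewrite unitmx_tr; case: (i - j)%N => [|d]; first by rewrite expr0 scale1r.
  by rewrite expr0n /= scale0r addr0 unitmx1.
have := Pstab P; rewrite trmxK mulmxDr mulmx1 => H.
have -> : W *m X = (W + W *m X) + (-1) *: W by rewrite scaleN1r addrC addKr.
by rewrite addmx_sub // scalemx_sub.
Qed.


Lemma Eorth m m' : (C m)^T *m (C m')^T = if m == m' then (C m)^T else 0.
Proof.
rewrite -trmx_mul (C_orth lamE lamM) eq_sym.
by case: eqP => [->|_] //; rewrite trmx0.
Qed.

Lemma W_up (j i : 'I_D) : (j <= i)%N -> W *m (C j)^T != 0 -> ((C i)^T <= W)%MS.
Proof.
move=> hji Wj.
have : [exists r, row r W *m (C j)^T != 0].
  apply: contraR Wj => /existsPn H; apply/eqP/row_matrixP => r.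
  by rewrite row_mul row0; move: (H r); rewrite negbK => /eqP.
case/existsP => r hr.
set x := row r W *m (C j)^T in hr.
have hxW : (x <= W)%MS.
  by rewrite /x -row_mul; apply: submx_trans (row_sub r _) (W_E j).
have xE : x *m (C j)^T = x by rewrite /x -mulmxA Eorth eqxx.
have : [exists kk, x 0 kk != 0].
  apply: contraR hr => /existsPn H; apply/eqP/matrixP => a b.
  by rewrite (ord1 a) [RHS]mxE; move: (H b); rewrite negbK => /eqP.
case/existsP => kk hk.
set c := (x 0 kk)^-1.
pose Y (v : 'rV[k]_n) := c *: (delta_mx kk 0 *m v).
have xY : forall v, x *m Y v = v.
  move=> v; rewrite /Y -scalemxAr mulmxA col_scalar mul_scalar_mx scalerA.
  by rewrite /c mulVf // scale1r.
have key : forall v, (1%:M + (C j)^T *m Y v *m (C i)^T) \in unitmx ->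
    (v *m (C i)^T <= W)%MS.
  move=> v hu.
  have hX : (C j)^T *m Y v *m (C i)^T =
      (C j)^T *m ((C j)^T *m Y v *m (C i)^T) *m (C i)^T.
    by rewrite !mulmxA Eorth eqxx -!mulmxA Eorth eqxx.
  have H := W_X hji hX hu.
  have := submx_trans (submxMr ((C j)^T *m Y v *m (C i)^T) hxW) H.
  by rewrite !mulmxA xE xY.
have rowsE : (forall v : 'rV_n, (v *m (C i)^T <= W)%MS) -> ((C i)^T <= W)%MS.
  move=> H; apply/row_subP => l; rewrite -[X in row l X]mul1mx row_mul.
  exact: H.
apply: rowsE.
case: (eqVneq i j) => [eij|nij]; last first.
  move=> v; apply: key.
  set X := (C j)^T *m Y v *m (C i)^T.
  have XX : X *m X = 0.
    by rewrite /X !mulmxA -[_ *m (C i)^T *m (C j)^T]mulmxA Eorth (negbTE nij)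
      mulmx0 !mul0mx.
  have : (1%:M + X) *m (1%:M - X) = 1%:M.
    by rewrite mulmxDl mul1mx mulmxBr mulmx1 XX subr0 subrK.
  by case/mulmx1_unit.
subst i.
have gen : forall v : 'rV_n, v *m (C j)^T = v -> 1 + c * v 0 kk != 0 ->
    (v <= W)%MS.
  move=> v hv hb; rewrite -hv; apply: key.
  set X := (C j)^T *m Y v *m (C j)^T.
  have YEY : Y v *m (C j)^T *m Y v = (c * v 0 kk) *: Y v.
    rewrite /Y -scalemxAl -scalemxAl -scalemxAr scalerA -!mulmxA (mulmxA v) hv.
    rewrite (mulmxA v) col_scalar mul_scalar_mx -scalemxAr !scalerA.
    by rewrite [c * v 0 kk * c]mulrC.
  have XX : X *m X = (c * v 0 kk) *: X.
    rewrite /X !mulmxA -[_ *m (C j)^T *m (C j)^T]mulmxA Eorth eqxx.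
    rewrite -[_ *m Y v *m (C j)^T *m Y v]mulmxA -[_ *m Y v *m _]mulmxA.
    rewrite -mulmxA (mulmxA (Y v)) YEY.
    by rewrite -scalemxAr -scalemxAl mulmxA.
  set s := (1 + c * v 0 kk)^-1.
  have : (1%:M + X) *m (1%:M - s *: X) = 1%:M.
    rewrite mulmxDl mul1mx mulmxBr mulmx1 -scalemxAr XX scalerA.
    rewrite addrA -[X in _ + X - _]scale1r -addrA -scalerBl -[in RHS](addr0 1%:M).
    rewrite -addrA; congr (_ + _).
    rewrite -scaleNr -scalerDl.
    have -> : - s + (1 - s * (c * v 0 kk)) = 0.
      rewrite /s; field; done.
    by rewrite scale0r.
  by case/mulmx1_unit.
move=> v; set w := v *m (C j)^T.
have hw : w *m (C j)^T = w by rewrite /w -mulmxA Eorth eqxx.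
have [hb|hb] := eqVneq (1 + c * w 0 kk) 0; last exact: gen.
have -> : w = (w - x) + x by rewrite subrK.
rewrite addmx_sub //; apply: gen.
  by rewrite mulmxBl hw xE.
rewrite (_ : (w - x) 0 kk = w 0 kk - x 0 kk); last by rewrite !mxE.
by rewrite mulrBr /c mulVf // addrA hb sub0r oppr_eq0 oner_eq0.
Qed.

End Main.

Lemma invmx_right (k : fieldType) (n : nat) (X Y : 'M[k]_n) :
  X *m Y = 1%:M -> invmx X = Y.
Proof.
move=> h; case: (mulmx1_unit h) => hX _.
by rewrite -[LHS]mulmx1 -h mulmxA mulVmx ?mul1mx.
Qed.

Section Proj.
Variables (k : fieldType) (n : nat) (A : 'M[k]_n).
Hypothesis AA : A *m A = A.
Definition Bc := 1%:M - A.

Lemma AB0 : A *m Bc = 0.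
Proof. by rewrite /Bc mulmxBr mulmx1 AA subrr. Qed.
Lemma BA0 : Bc *m A = 0.
Proof. by rewrite /Bc mulmxBl mul1mx AA subrr. Qed.
Lemma BB : Bc *m Bc = Bc.
Proof. by rewrite {1}/Bc mulmxBl mul1mx AB0 subr0. Qed.
Lemma ABsum : A + Bc = 1%:M.
Proof. by rewrite /Bc addrC subrK. Qed.
#[local] Opaque Bc.

Definition Mt (N' : nat) (a : k) := a ^- N' *: (a *: A + Bc).

Lemma Mt_mul N' a b : Mt N' a *m Mt N' b = Mt N' (a * b).
Proof.
rewrite /Mt -scalemxAl -scalemxAr scalerA -invfM -exprMn; congr (_ *: _).
rewrite mulmxDl (mulmxDr (a *: A)) (mulmxDr Bc) -!scalemxAl -!scalemxAr AA AB0 BA0 BB !scaler0.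
by rewrite addr0 add0r scalerA.
Qed.

Lemma Mt1 N' : Mt N' 1 = 1%:M.
Proof. by rewrite /Mt expr1n invr1 !scale1r ABsum. Qed.

Lemma Mt_conj N' (h : 'M[k]_n) a : a != 0 ->
  Mt N' a^-1 *m h *m Mt N' a =
  (A *m h *m A + Bc *m h *m Bc) + a^-1 *: (A *m h *m Bc) + a *: (Bc *m h *m A).
Proof.
move=> a0; rewrite /Mt -scalemxAl -scalemxAl -scalemxAr scalerA.
rewrite exprVn invrK mulrC mulVf ?expf_neq0 // scale1r.
rewrite mulmxDr (mulmxDl (a^-1 *: A)) !(mulmxDl (a^-1 *: A *m h)).
rewrite -!scalemxAl -!scalemxAr scalerA mulVf // scale1r.
rewrite -!addrA; congr (_ + _).
by rewrite [LHS]addrC -addrA addrCA.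
Qed.

Lemma stab_iff (h : 'M[k]_n) : ((A *m h <= A)%MS = (A *m h *m Bc == 0)).
Proof.
apply/idP/idP.
  by case/submxP => Z ->; rewrite -mulmxA AB0 mulmx0.
move/eqP => H.
have -> : A *m h = A *m h *m A.
  by rewrite -{1}[A *m h]mulmx1 -ABsum mulmxDr H addr0.
exact: submxMl.
Qed.

Lemma D_unit (h : 'M[k]_n) : h \in unitmx -> A *m h *m Bc = 0 ->
  A *m h *m A + Bc *m h *m Bc \in unitmx.
Proof.
move=> hu H.
set g := invmx h.
have Ah : (A *m h <= A)%MS by rewrite stab_iff H.
have Ahe : (A *m h == A)%MS.
  rewrite -(mxrank_leqif_eq Ah).2 mxrankMfree ?row_free_unit //.
have Ag : (A *m g <= A)%MS.
  have : (A <= A *m h)%MS by case/andP: Ahe.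
  move/(submxMr g); rewrite -mulmxA mulmxV // mulmx1.
  done.
have AgB : A *m g *m Bc = 0 by apply/eqP; rewrite -stab_iff.
have AhA : A *m h *m A = A *m h.
  by rewrite -{2}[A *m h]mulmx1 -ABsum mulmxDr H addr0.
have BgB : Bc *m g *m Bc = g *m Bc.
  rewrite [in RHS](_ : g = (A + Bc) *m g); last by rewrite ABsum mul1mx.
  by rewrite (mulmxDl A) (mulmxDl (A *m g)) AgB add0r.
have : (A *m h *m A + Bc *m h *m Bc) *m (A *m g *m A + Bc *m g *m Bc) = 1%:M.
  rewrite (mulmxDl (A *m h *m A)) (mulmxDr (A *m h *m A)) (mulmxDr (Bc *m h *m Bc)).
  have -> : A *m h *m A *m (Bc *m g *m Bc) = 0.
    by rewrite -!mulmxA (mulmxA A Bc) AB0 mul0mx !mulmx0.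
  have -> : Bc *m h *m Bc *m (A *m g *m A) = 0.
    by rewrite -!mulmxA (mulmxA Bc A) BA0 mul0mx !mulmx0.
  rewrite addr0 add0r AhA BgB.
  have e1 : A *m h *m (A *m g *m A) = A.
    by rewrite !mulmxA AhA -(mulmxA A h g) mulmxV // mulmx1 AA.
  have e2 : Bc *m h *m Bc *m (g *m Bc) = Bc.
    by rewrite -!mulmxA (mulmxA Bc g Bc) BgB (mulmxA h g) mulmxV // mul1mx BB.
  by rewrite e1 e2 ABsum.
by case/mulmx1_unit.
Qed.

End Proj.

Unset Implicit Arguments.

Theorem lemma4p5 (k : closedFieldType) (n : nat) (U Ut : 'M[k]_n) :
  (U :&: Ut == (0 : 'M[k]_n))%MS -> (U + Ut == (1%:M : 'M[k]_n))%MS ->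
  forall W : 'M[k]_n, in_SK U Ut W <-> in_FK U Ut [:: W].
Proof.
move=> _ _ W; split; last first.
  move=> h; exists [:: W]; split => //; exists W; first by rewrite mem_seq1.
  by apply/eqmxP; apply: eqmx_refl.
case=> fl [[hfl [lam [hco hst]]] [W' W'in eqW]].
have hWW : (W' :=: W)%MS by apply/eqmxP.
split.
  case/andP: hfl => /allP hall _; have := hall W' W'in.
  by rewrite /is_flag /= (eqmx_rank eqW) !andbT.
case: hco => hK hl1 hlM [N [p hp]].
pose D := \max_(i : 'I_n) \max_(j : 'I_n) size (p i j).
pose C (m : 'I_D) := \matrix_(i, j) (p i j)`_m.
have lamE : forall a, a != 0 -> lam a = a ^- N *: \sum_(m < D) a ^+ m *: C m.
  move=> a a0; apply/matrixP => i j; rewrite hp // !mxE summxE.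
  congr (_ * _); rewrite (@horner_coef_wide _ D); last first.
    rewrite /D; apply: (leq_trans _ (leq_bigmax (F := fun i => \max_(j : 'I_n) size (p i j)) i)).
    exact: (leq_bigmax (F := fun j => size (p i j)) j).

  by apply: eq_bigr => m _; rewrite !mxE mulrC.
have Pstab : forall g, P_lam lam g -> (W *m g^T <= W)%MS.
  move=> g /hst /andP [_ /allP hall].
  have := hall W' W'in; case/andP => h1 _.
  by rewrite -(eqmxMr _ hWW) -hWW.
have Eo := Eorth lamE hlM.
pose inS (m : nat) := [exists j : 'I_D, (j <= m)%N && (W *m (C j)^T != 0)].
pose A := \sum_(m < D | inS m) (C m)^T.
have sumE : forall (P : pred 'I_D) (m : 'I_D),
    (C m)^T *m (\sum_(m' < D | P m') (C m')^T) = if P m then (C m)^T else 0.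
  move=> P m; rewrite mulmx_sumr.
  case: ifP => Pm.
    rewrite (bigD1 m) //= Eo eqxx big1 ?addr0 // => i /andP [_ /negbTE ni].
    by rewrite Eo eq_sym ni.
  rewrite big1 // => i Pi; rewrite Eo; case: eqP => // mi.
  by move: Pm; rewrite mi Pi.
have Esum : \sum_(m < D) (C m)^T = 1%:M.
  have := congr1 trmx (C_sum lamE hl1); rewrite trmx1 linear_sum /=.
  by [].
have AA : A *m A = A.
  rewrite {1}/A mulmx_suml; apply: eq_bigr => m hm.
  by rewrite /A sumE hm.
have WAe : W = W *m A.
  rewrite -{1}[W]mulmx1 -Esum !mulmx_sumr [LHS](bigID (fun m : 'I_D => inS m)) /=.
  rewrite [X in _ + X]big1 ?addr0 //.
  move=> m /negbTE hm; apply/eqP; apply: contraFT hm => hWm.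
  by apply/existsP; exists m; rewrite leqnn hWm.
have hWA : (W == A)%MS.
  apply/andP; split.
    by rewrite {1}WAe; exact: submxMl.
  apply: summx_sub => m hm; case/existsP: hm => j /andP [hjm hWj].
  exact: (W_up lamE hl1 hlM Pstab hjm hWj).
have hWA' : (W :=: A)%MS by apply/eqmxP.
have hKa : forall a, a != 0 ->
    [&& lam a \in unitmx, Ut *m (lam a)^T == Ut & (U *m (lam a)^T <= U)%MS].
  by move=> a a0; case/andP: (hK a a0).
have UE : forall m, (U *m (C m)^T <= U)%MS.
  apply: (stable_E lamE) => b b0.
  by case/and3P: (hKa b b0).
have UA : (U *m A <= U)%MS.
  by rewrite /A mulmx_sumr; apply: summx_sub => m _; exact: UE.
have UB : (U *m Bc A <= U)%MS.
  by rewrite /Bc mulmxBr mulmx1 addmx_sub // -scaleN1r scalemx_sub.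
have UtE : forall m : 'I_D, (m : nat) != N -> Ut *m (C m)^T = 0.
  apply: (fixed_E lamE hlM) => b b0.
  by case/and3P: (hKa b b0) => _ /eqP.
have UtA : Ut *m A = if inS N then Ut else 0.
  rewrite /A mulmx_sumr big_mkcond /=.
  rewrite (eq_bigr (fun m : 'I_D => if inS N then Ut *m (C m)^T else 0)); last first.
    move=> m _; have [mN|mN] := eqVneq (m : nat) N; first by rewrite mN.
    by rewrite UtE // !if_same.
  case: (inS N); last by rewrite big1.
  by rewrite -mulmx_sumr Esum mulmx1.
pose N' := if inS N then 1%N else 0%N.
pose mu a := (Mt A N' a)^T.
have Minv : forall a, a != 0 -> Mt A N' a *m Mt A N' a^-1 = 1%:M.
  by move=> a a0; rewrite (Mt_mul AA) mulfV // Mt1.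
have muinv : forall a, a != 0 -> invmx (mu a) = mu a^-1.
  move=> a a0; apply: invmx_right.
  by rewrite /mu -trmx_mul (Mt_mul AA) mulVf // Mt1 trmx1.
exists mu; split.
  split.
  - move=> a a0.
    have Mu : Mt A N' a \in unitmx by case: (mulmx1_unit (Minv a a0)).
    rewrite /mu unitmx_tr Mu /= /inK unitmx_tr Mu trmxK /=.
    apply/andP; split.
      rewrite /Mt -scalemxAr mulmxDr -scalemxAr UtA /Bc mulmxBr mulmx1 UtA /N'.
      case: (inS N).
        by rewrite expr1 subrr addr0 scalerA mulVf // scale1r.
      by rewrite expr0 invr1 scale1r scaler0 subr0 add0r.
    rewrite /Mt -scalemxAr scalemx_sub // mulmxDr -scalemxAr addmx_sub //.
    exact: scalemx_sub.
  - by rewrite /mu Mt1 trmx1.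
  - by move=> a b a0 b0; rewrite /mu -trmx_mul (Mt_mul AA) [b * a]mulrC.
  - exists N', (fun i j => (A j i) *: 'X + (Bc A j i)%:P) => a a0 i j.
    by rewrite /mu /Mt !mxE hornerD hornerZ hornerX hornerC [A j i * a]mulrC.
have Wstab : forall h : 'M[k]_n, h \in unitmx ->
    ((W *m h == W)%MS = (A *m h *m Bc A == 0)).
  move=> h hu; rewrite -(stab_iff AA) -(eqmxMr _ hWA') -hWA'.
  apply/idP/idP; first by case/andP.
  move=> hle; rewrite -(mxrank_leqif_eq hle).2.
  by rewrite mxrankMfree ?row_free_unit.
move=> g; split.
  case/andP => gu /andP [hWg _].
  have hAg : A *m g^T *m Bc A = 0.
    by apply/eqP; rewrite -Wstab ?unitmx_tr.
  split => //.
  exists (fun r s => ((A *m g^T *m A + Bc A *m g^T *m Bc A) s r)%:P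
                    + ((Bc A *m g^T *m A) s r) *: 'X); split.
    move=> a a0 r s.
    rewrite muinv // /mu -{1}(trmxK g) -!trmx_mul mulmxA Mt_conj // hAg scaler0 addr0.
    by rewrite !mxE hornerD hornerC hornerZ hornerX mulrC.
  have -> : \matrix_(r, s) (((A *m g^T *m A + Bc A *m g^T *m Bc A) s r)%:P
                    + ((Bc A *m g^T *m A) s r) *: 'X).[0]
     = (A *m g^T *m A + Bc A *m g^T *m Bc A)^T.
    by apply/matrixP => r s; rewrite !mxE hornerD hornerC hornerZ hornerX mulr0 addr0.
  by rewrite unitmx_tr (D_unit AA) ?unitmx_tr.
case=> gu [q [hq _]].
rewrite /stab gu /= andbT Wstab ?unitmx_tr //.
set Z := A *m g^T *m Bc A.
set L := A *m g^T *m A + Bc A *m g^T *m Bc A.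
set R := Bc A *m g^T *m A.
apply/eqP/matrixP => r s; rewrite [RHS]mxE.
pose Q := q s r * 'X - (Z r s)%:P - (L r s) *: 'X - (R r s) *: 'X^2.
have Q0 : Q = 0.
  apply: poly_nz0 => a a0.
  have := hq a a0 s r.
  rewrite muinv // /mu -{1}(trmxK g) -!trmx_mul mulmxA Mt_conj //.
  move=> E; rewrite /Q !(hornerD, hornerN, hornerM, hornerX, hornerC, hornerZ, hornerXn) -E.
  have -> : (L + a^-1 *: Z + a *: R)^T s r = L r s + a^-1 * Z r s + a * R r s.
    by rewrite !mxE.
  have gen : forall l z x : k, (l + a^-1 * z + a * x) * a - z - l * a - x * (a * a) = 0.
    by move=> l z x; field.
  exact: gen.
have := congr1 (fun P : {poly k} => P`_0) Q0.
rewrite /Q !coefB coefMX coefC coefZ coefX coefZ coefXn /= coef0.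
by rewrite !mulr0 !subr0 sub0r => /eqP; rewrite oppr_eq0 => /eqP.
Qed.
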